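(* Let $\beta>\alpha>0$ and let $q=(q_1,q_2,q_3,q_4)$ be a convex non-collinear central configuration of the planar Newtonian 4-body problem with masses $m_1=m_2=\beta$, $m_3=m_4=\alpha$, with $q_1,q_2,q_3,q_4$ in cyclic order around the convex quadrilateral. If $r_{23}=r_{14}$, then $\Delta_4=-\Delta_3$.
   Context: Bodies have positions $q_i\in\mathbb{R}^2$ and masses $m_i>0$; $r_{ij}=\|q_i-q_j\|$; $U(q)=\sum_{i<j}m_im_j/r_{ij}$. A configuration with distinct points and $\sum_i m_iq_i=0$ is a central configuration if $\sum_{j\neq i} m_j\frac{q_j-q_i}{r_{ij}^3}=\lambda q_i$ for all $i$ and some constant $\lambda$. ''Convex non-collinear'': the four points are vertices of a strictly convex quadrilateral. For $1\le i\le 4$, $|\Delta_i|$ denotes the area of the triangle formed by the three points $q_j$, $j\neq i$, and the oriented areas are $\Delta_1=-|\Delta_1|$, $\Delta_2=|\Delta_2|$, $\Delta_3=-|\Delta_3|$, $\Delta_4=|\Delta_4|$; they satisfy $\Delta_1+\Delta_2+\Delta_3+\Delta_4=0$. *)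

(* Defs.v *)
From Stdlib Require Import Reals List.
Import ListNotations.
Open Scope R_scope.

Definition pt := (R * R)%type.

Definition dist2 (a b : pt) : R := sqrt ((fst a - fst b)^2 + (snd a - snd b)^2).

Definition idx : list nat := [1%nat; 2%nat; 3%nat; 4%nat].

Definition rsum (l : list R) : R := fold_right Rplus 0 l.

Definition accel_x (q : nat -> pt) (m : nat -> R) (i : nat) : R :=
  rsum (map (fun j => if Nat.eq_dec j i then 0
                      else m j * (fst (q j) - fst (q i)) / (dist2 (q i) (q j)) ^ 3) idx).
Definition accel_y (q : nat -> pt) (m : nat -> R) (i : nat) : R :=
  rsum (map (fun j => if Nat.eq_dec j i then 0
                      else m j * (snd (q j) - snd (q i)) / (dist2 (q i) (q j)) ^ 3) idx).

Definition central_configuration (q : nat -> pt) (m : nat -> R) : Prop :=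
  (forall i j, In i idx -> In j idx -> i <> j -> q i <> q j) /\
  rsum (map (fun i => m i * fst (q i)) idx) = 0 /\
  rsum (map (fun i => m i * snd (q i)) idx) = 0 /\
  exists lam : R, forall i, In i idx ->
    accel_x q m i = lam * fst (q i) /\ accel_y q m i = lam * snd (q i).

(* twice the signed area of triangle abc *)
Definition orient (a b c : pt) : R :=
  (fst b - fst a) * (snd c - snd a) - (snd b - snd a) * (fst c - fst a).

Definition convex_quad_in_order (q1 q2 q3 q4 : pt) : Prop :=
  (0 < orient q1 q2 q3 /\ 0 < orient q2 q3 q4 /\ 0 < orient q3 q4 q1 /\ 0 < orient q4 q1 q2) \/
  (orient q1 q2 q3 < 0 /\ orient q2 q3 q4 < 0 /\ orient q3 q4 q1 < 0 /\ orient q4 q1 q2 < 0).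

Definition tri_area (a b c : pt) : R := Rabs (orient a b c) / 2.

(* oriented areas with the paper's sign convention:
   Delta_1 = -|Delta_1|, Delta_2 = |Delta_2|, Delta_3 = -|Delta_3|, Delta_4 = |Delta_4|,
   where |Delta_i| is the area of the triangle formed by q_j, j <> i. *)
Definition oDelta (q : nat -> pt) (i : nat) : R :=
  match i with
  | 1%nat => - tri_area (q 2%nat) (q 3%nat) (q 4%nat)
  | 2%nat => tri_area (q 1%nat) (q 3%nat) (q 4%nat)
  | 3%nat => - tri_area (q 1%nat) (q 2%nat) (q 4%nat)
  | 4%nat => tri_area (q 1%nat) (q 2%nat) (q 3%nat)
  | _ => 0
  end.

(* Main.v *)
Require Import Defs.
From Stdlib Require Import Reals List Lra Psatz.
Open Scope R_scope.

Lemma dist2_sym a b : dist2 a b = dist2 b a.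
Proof. unfold dist2. f_equal. ring. Qed.

Definition S (a b : pt) : R := / (dist2 a b) ^ 3.
Definition sq (a b : pt) : R := (fst a - fst b)^2 + (snd a - snd b)^2.
Lemma gram a b c d e f D : a^2+b^2=D -> c^2+d^2=D -> e^2+f^2=D ->
 (a-c)^2+(b-d)^2=D -> (a-e)^2+(b-f)^2=D -> (c-e)^2+(d-f)^2=D -> a*d - b*c = 0.
Proof.
intros H1 H2 H3 H4 H5 H6.
assert (P1: a*c+b*d = D/2) by nra.
assert (P2: a*e+b*f = D/2) by nra.
assert (P3: c*e+d*f = D/2) by nra.
assert (G: (a^2+b^2)*((c^2+d^2)*(e^2+f^2) - (c*e+d*f)^2) - (a*c+b*d)*((a*c+b*d)*(e^2+f^2) - (c*e+d*f)*(a*e+b*f)) + (a*e+b*f)*((a*c+b*d)*(c*e+d*f) - (c^2+d^2)*(a*e+b*f)) = 0) by ring.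
rewrite H1, H2, H3, P1, P2, P3 in G.
assert (D0: D = 0).
{ assert (HD: D*(D*D) = 0) by nra. apply Rmult_integral in HD; destruct HD as [HD|HD]; auto. apply Rmult_integral in HD; destruct HD; auto. }
subst D. assert (a = 0) by nra. assert (b=0) by nra. subst. ring.
Qed.
Lemma cube_inj x y : 0 <= x -> 0 <= y -> x^3 = y^3 -> x = y.
Proof. intros. destruct (Rtotal_order x y) as [h|[h|h]]; auto.
- assert (y^3 - x^3 = (y-x)*(y*y+x*y+x*x)) by ring. assert (0 < (y-x)*(y*y+x*y+x*x)) by (apply Rmult_lt_0_compat; nra). lra.
- assert (x^3 - y^3 = (x-y)*(y*y+x*y+x*x)) by ring. assert (0 < (x-y)*(y*y+x*y+x*x)) by (apply Rmult_lt_0_compat; nra). lra.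
Qed.
Lemma prod3 a b c : a*b*c = 0 -> a<>0 -> c<>0 -> b = 0.
Proof. intros H Ha Hc. apply Rmult_integral in H. destruct H as [H|H]; [|contradiction].
apply Rmult_integral in H. destruct H; [contradiction|auto]. Qed.

Lemma core a b x1 y1 x2 y2 x3 y3 x4 y4 t12 t13 t14 t23 t24 t34 D1 D2 D3 D4 :
  0 < a -> 0 < b ->
  b*t12*(x2-x1) + a*t13*(x3-x1) + a*t14*(x4-x1) = 0 ->
  b*t12*(y2-y1) + a*t13*(y3-y1) + a*t14*(y4-y1) = 0 ->
  b*t12*(x1-x2) + a*t23*(x3-x2) + a*t24*(x4-x2) = 0 ->
  b*t12*(y1-y2) + a*t23*(y3-y2) + a*t24*(y4-y2) = 0 ->
  b*t13*(x1-x3) + b*t23*(x2-x3) + a*t34*(x4-x3) = 0 ->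
  b*t13*(y1-y3) + b*t23*(y2-y3) + a*t34*(y4-y3) = 0 ->
  D1 = - ((x3-x2)*(y4-y2) - (y3-y2)*(x4-x2)) ->
  D2 = (x3-x1)*(y4-y1) - (y3-y1)*(x4-x1) ->
  D3 = - ((x2-x1)*(y4-y1) - (y2-y1)*(x4-x1)) ->
  D4 = (x2-x1)*(y3-y1) - (y2-y1)*(x3-x1) ->
  D1 <> 0 -> D2 <> 0 -> D3 <> 0 -> D4 <> 0 -> D2 + D4 <> 0 ->
  t23 = t14 ->
  (t12 = 0 /\ t13 = 0 /\ t14 = 0 /\ t23 = 0 /\ t24 = 0 /\ t34 = 0) \/ D3 + D4 = 0.
Proof.
intros ha hb r1x r1y r2x r2y r3x r3y e1 e2 e3 e4 n1 n2 n3 n4 n24 ht.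
assert (Hs : D1 + D2 + D3 + D4 = 0) by (subst; ring).
assert (R1 : b*t12*D4 - a*t14*D2 = 0).
{ assert (E: (b*t12*(x2-x1) + a*t13*(x3-x1) + a*t14*(x4-x1))*(y3-y1) - (b*t12*(y2-y1) + a*t13*(y3-y1) + a*t14*(y4-y1))*(x3-x1) = 0) by (rewrite r1x, r1y; ring).
  subst; lra. }
assert (R1' : a*t13*D4 - a*t14*D3 = 0).
{ assert (E: (b*t12*(x2-x1) + a*t13*(x3-x1) + a*t14*(x4-x1))*(y2-y1) - (b*t12*(y2-y1) + a*t13*(y3-y1) + a*t14*(y4-y1))*(x2-x1) = 0) by (rewrite r1x, r1y; ring).
  subst; lra. }
assert (R2 : b*t12*D3 - a*t23*D1 = 0).
{ assert (E: (b*t12*(x1-x2) + a*t23*(x3-x2) + a*t24*(x4-x2))*(y4-y2) - (b*t12*(y1-y2) + a*t23*(y3-y2) + a*t24*(y4-y2))*(x4-x2) = 0) by (rewrite r2x, r2y; ring).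
  subst; lra. }
assert (R2' : a*t24*D3 - a*t23*D4 = 0).
{ assert (E: (b*t12*(x1-x2) + a*t23*(x3-x2) + a*t24*(x4-x2))*(y1-y2) - (b*t12*(y1-y2) + a*t23*(y3-y2) + a*t24*(y4-y2))*(x1-x2) = 0) by (rewrite r2x, r2y; ring).
  subst; lra. }
assert (R3 : b*t13*D4 - a*t34*D1 = 0).
{ assert (E: (b*t13*(x1-x3) + b*t23*(x2-x3) + a*t34*(x4-x3))*(y2-y3) - (b*t13*(y1-y3) + b*t23*(y2-y3) + a*t34*(y4-y3))*(x2-x3) = 0) by (rewrite r3x, r3y; ring).
  subst; lra. }
clear e1 e2 e3 e4 r1x r1y r2x r2y r3x r3y.
assert (X: (b*t12*D4 - a*t14*D2)*D3 - (b*t12*D3 - a*t23*D1)*D4 = 0) by (rewrite R1, R2; ring).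
rewrite ht in X.
assert (K: a*t14*(D2*D3 - D1*D4) = 0) by lra.
apply Rmult_integral in K. destruct K as [K|K].
- apply Rmult_integral in K. destruct K as [K|K]; [lra|].
  left. rewrite K in *. rewrite ht.
  assert (h12: t12 = 0) by (apply (prod3 b t12 D4); [lra|lra|auto]).
  assert (h13: t13 = 0) by (apply (prod3 a t13 D4); [lra|lra|auto]).
  assert (h24: t24 = 0) by (apply (prod3 a t24 D3); [rewrite ht in R2'; lra|lra|auto]).
  rewrite h13 in R3.
  assert (h34: t34 = 0) by (apply (prod3 a t34 D1); [lra|lra|auto]).
  repeat split; auto.
- right.
  assert (HD1: D1 = -(D2+D3+D4)) by lra. rewrite HD1 in K.
  assert (Z: (D2+D4)*(D3+D4) = 0) by (rewrite <- K; ring).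
  apply Rmult_integral in Z. destruct Z; [contradiction|auto].
Qed.

Lemma Ssq a b c d : S a b = S c d -> sq a b = sq c d.
Proof.
unfold S; intro H. apply Rinv_eq_reg in H.
apply cube_inj in H; try apply sqrt_pos.
unfold dist2 in H. apply sqrt_inj in H; auto;
apply Rplus_le_le_0_compat; apply pow2_ge_0.
Qed.

Section Ex.
Variables (q : nat -> pt) (m : nat -> R).
Notation X i := (fst (q i%nat)).
Notation Y i := (snd (q i%nat)).
Notation Q i := (q i%nat).

Ltac expd := unfold accel_x, accel_y, idx, rsum, S; simpl; unfold Rdiv;
  repeat rewrite (dist2_sym (Q 2) (Q 1)); repeat rewrite (dist2_sym (Q 3) (Q 1));
  repeat rewrite (dist2_sym (Q 3) (Q 2)); repeat rewrite (dist2_sym (Q 4) (Q 1));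
  repeat rewrite (dist2_sym (Q 4) (Q 2)); repeat rewrite (dist2_sym (Q 4) (Q 3)); ring.

Lemma ax1 : accel_x q m 1 = m 2%nat * (X 2 - X 1) * S (Q 1) (Q 2) + m 3%nat * (X 3 - X 1) * S (Q 1) (Q 3) + m 4%nat * (X 4 - X 1) * S (Q 1) (Q 4).
Proof. expd. Qed.
Lemma ay1 : accel_y q m 1 = m 2%nat * (Y 2 - Y 1) * S (Q 1) (Q 2) + m 3%nat * (Y 3 - Y 1) * S (Q 1) (Q 3) + m 4%nat * (Y 4 - Y 1) * S (Q 1) (Q 4).
Proof. expd. Qed.
Lemma ax2 : accel_x q m 2 = m 1%nat * (X 1 - X 2) * S (Q 1) (Q 2) + m 3%nat * (X 3 - X 2) * S (Q 2) (Q 3) + m 4%nat * (X 4 - X 2) * S (Q 2) (Q 4).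
Proof. expd. Qed.
Lemma ay2 : accel_y q m 2 = m 1%nat * (Y 1 - Y 2) * S (Q 1) (Q 2) + m 3%nat * (Y 3 - Y 2) * S (Q 2) (Q 3) + m 4%nat * (Y 4 - Y 2) * S (Q 2) (Q 4).
Proof. expd. Qed.
Lemma ax3 : accel_x q m 3 = m 1%nat * (X 1 - X 3) * S (Q 1) (Q 3) + m 2%nat * (X 2 - X 3) * S (Q 2) (Q 3) + m 4%nat * (X 4 - X 3) * S (Q 3) (Q 4).
Proof. expd. Qed.
Lemma ay3 : accel_y q m 3 = m 1%nat * (Y 1 - Y 3) * S (Q 1) (Q 3) + m 2%nat * (Y 2 - Y 3) * S (Q 2) (Q 3) + m 4%nat * (Y 4 - Y 3) * S (Q 3) (Q 4).
Proof. expd. Qed.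
End Ex.

Theorem lemma4p2 (alpha beta : R) (q : nat -> pt) (m : nat -> R) :
  0 < alpha -> alpha < beta ->
  m 1%nat = beta -> m 2%nat = beta -> m 3%nat = alpha -> m 4%nat = alpha ->
  central_configuration q m ->
  convex_quad_in_order (q 1%nat) (q 2%nat) (q 3%nat) (q 4%nat) ->
  dist2 (q 2%nat) (q 3%nat) = dist2 (q 1%nat) (q 4%nat) ->
  oDelta q 4%nat = - oDelta q 3%nat.
Proof.
intros ha hab m1 m2 m3 m4 [Hdist [Hcx [Hcy [lam Hl]]]] Hconv Hd.
destruct (Hl 1%nat ltac:(simpl; auto)) as [E1x E1y].
destruct (Hl 2%nat ltac:(simpl; auto)) as [E2x E2y].
destruct (Hl 3%nat ltac:(simpl; auto)) as [E3x E3y].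
rewrite ax1 in E1x. rewrite ay1 in E1y. rewrite ax2 in E2x. rewrite ay2 in E2y.
rewrite ax3 in E3x. rewrite ay3 in E3y.
unfold idx, rsum in Hcx, Hcy. simpl in Hcx, Hcy.
rewrite m1, m2, m3, m4 in *.
set (mu := lam / (2*alpha + 2*beta)).
assert (Hm : mu * (2*alpha+2*beta) = lam) by (unfold mu; field; lra).
assert (Cx := f_equal (Rmult mu) Hcx). assert (Cy := f_equal (Rmult mu) Hcy).
set (D1 := - orient (q 2%nat) (q 3%nat) (q 4%nat)).
set (D2 := orient (q 3%nat) (q 4%nat) (q 1%nat)).
set (D3 := - orient (q 4%nat) (q 1%nat) (q 2%nat)).
set (D4 := orient (q 1%nat) (q 2%nat) (q 3%nat)).
assert (HO : D1 <> 0 /\ D2 <> 0 /\ D3 <> 0 /\ D4 <> 0 /\ D2 + D4 <> 0).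
{ unfold D1, D2, D3, D4; destruct Hconv as [[h1 [h2 [h3 h4]]]|[h1 [h2 [h3 h4]]]];
  repeat split; lra. }
destruct HO as [n1 [n2 [n3 [n4 n24]]]].
destruct (core alpha beta (fst (q 1%nat)) (snd (q 1%nat)) (fst (q 2%nat)) (snd (q 2%nat))
   (fst (q 3%nat)) (snd (q 3%nat)) (fst (q 4%nat)) (snd (q 4%nat))
   (S (q 1%nat) (q 2%nat) + mu) (S (q 1%nat) (q 3%nat) + mu) (S (q 1%nat) (q 4%nat) + mu)
   (S (q 2%nat) (q 3%nat) + mu) (S (q 2%nat) (q 4%nat) + mu) (S (q 3%nat) (q 4%nat) + mu)
   D1 D2 D3 D4) as [Z|Z]; auto; try lra.
- assert (Hm1 := f_equal (fun z => z * fst (q 1%nat)) Hm). simpl in Hm1. lra.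
- assert (Hm1 := f_equal (fun z => z * snd (q 1%nat)) Hm). simpl in Hm1. lra.
- assert (Hm1 := f_equal (fun z => z * fst (q 2%nat)) Hm). simpl in Hm1. lra.
- assert (Hm1 := f_equal (fun z => z * snd (q 2%nat)) Hm). simpl in Hm1. lra.
- assert (Hm1 := f_equal (fun z => z * fst (q 3%nat)) Hm). simpl in Hm1. lra.
- assert (Hm1 := f_equal (fun z => z * snd (q 3%nat)) Hm). simpl in Hm1. lra.
- unfold D2, orient; ring.
- unfold D3, orient; ring.
- unfold S; rewrite Hd; auto.
- exfalso. destruct Z as [z12 [z13 [z14 [z23 [z24 z34]]]]].
  assert (s13 : sq (q 1%nat) (q 3%nat) = sq (q 1%nat) (q 2%nat)) by (apply Ssq; lra).
  assert (s14 : sq (q 1%nat) (q 4%nat) = sq (q 1%nat) (q 2%nat)) by (apply Ssq; lra).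
  assert (s23 : sq (q 2%nat) (q 3%nat) = sq (q 1%nat) (q 2%nat)) by (apply Ssq; lra).
  assert (s24 : sq (q 2%nat) (q 4%nat) = sq (q 1%nat) (q 2%nat)) by (apply Ssq; lra).
  assert (s34 : sq (q 3%nat) (q 4%nat) = sq (q 1%nat) (q 2%nat)) by (apply Ssq; lra).
  apply n4. unfold D4, orient.
  apply (gram (fst (q 2%nat) - fst (q 1%nat)) (snd (q 2%nat) - snd (q 1%nat)) (fst (q 3%nat) - fst (q 1%nat)) (snd (q 3%nat) - snd (q 1%nat)) (fst (q 4%nat) - fst (q 1%nat)) (snd (q 4%nat) - snd (q 1%nat)) (sq (q 1%nat) (q 2%nat))).
  + unfold sq; ring.
  + rewrite <- s13; unfold sq; ring.
  + rewrite <- s14; unfold sq; ring.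
  + rewrite <- s23; unfold sq; ring.
  + rewrite <- s24; unfold sq; ring.
  + rewrite <- s34; unfold sq; ring.
- unfold oDelta, tri_area. rewrite Ropp_involutive.
  replace (orient (q 1%nat) (q 2%nat) (q 4%nat)) with (orient (q 1%nat) (q 2%nat) (q 3%nat)); auto.
  unfold D3, D4, orient in *; lra.
Qed.
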